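(* Let $\mathbf{K}$ be a field of characteristic different from $2$ and let $A$ be a (not necessarily associative) algebra over $\mathbf{K}$. For $a,b,c\in A$ put $\langle a,b,c\rangle=(ab)c-a(bc)+b(ac)$. Then $A$ is a unary Leibniz algebra if and only if $A$ satisfies the identities $$\langle a,a,a\rangle=0 \quad\text{and}\quad \langle aa,a,a\rangle=0 \qquad\text{for all } a\in A.$$
   Context: A (left) Leibniz algebra is an algebra satisfying $(ab)c=a(bc)-b(ac)$ for all $a,b,c$, i.e. $\langle a,b,c\rangle=0$. An algebra $A$ is called a unary Leibniz algebra if every subalgebra of $A$ generated by a single element is a Leibniz algebra. *)

(* Defs.v *)
From HB Require Import structures.
From mathcomp Require Import all_boot all_order all_algebra.
Set Implicit Arguments. Unset Strict Implicit. Unset Printing Implicit Defensive.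
Import GRing.Theory.
Local Open Scope ring_scope.

(* A (not necessarily associative) K-algebra: a K-vector space A (an lmodType)
   with a multiplication mul : A -> A -> A that is K-bilinear. *)
Definition bilinear_mul (K : fieldType) (A : lmodType K) (mul : A -> A -> A) : Prop :=
  (forall (k : K) (x y z : A), mul (k *: x + y) z = k *: mul x z + mul y z) /\
  (forall (k : K) (x y z : A), mul x (k *: y + z) = k *: mul x y + mul x z).

Definition leib (K : fieldType) (A : lmodType K) (mul : A -> A -> A) (a b c : A) : A :=
  mul (mul a b) c - mul a (mul b c) + mul b (mul a c).

Inductive gen1 (K : fieldType) (A : lmodType K) (mul : A -> A -> A) (g : A) : A -> Prop :=
  | gen1_g : gen1 mul g g
  | gen1_0 : gen1 mul g 0
  | gen1_D x y : gen1 mul g x -> gen1 mul g y -> gen1 mul g (x + y)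
  | gen1_Z (k : K) x : gen1 mul g x -> gen1 mul g (k *: x)
  | gen1_M x y : gen1 mul g x -> gen1 mul g y -> gen1 mul g (mul x y).

Definition leibniz_gen1 (K : fieldType) (A : lmodType K) (mul : A -> A -> A) (g : A) : Prop :=
  forall a b c, gen1 mul g a -> gen1 mul g b -> gen1 mul g c -> leib mul a b c = 0.

Definition unary_leibniz (K : fieldType) (A : lmodType K) (mul : A -> A -> A) : Prop :=
  forall g : A, leibniz_gen1 mul g.

(* Main.v *)
Require Import Defs.
From mathcomp Require Import all_boot all_order all_algebra zify.
Set Implicit Arguments. Unset Strict Implicit. Unset Printing Implicit Defensive.
Import GRing.Theory.
Local Open Scope ring_scope.

Inductive zexpr := ZAt of nat | ZAdd of zexpr & zexpr | ZOpp of zexpr | ZZero.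

Fixpoint zeval (V : zmodType) (env : seq V) (e : zexpr) : V :=
  match e with
  | ZAt n => nth 0 env n
  | ZAdd a b => zeval env a + zeval env b
  | ZOpp a => - zeval env a
  | ZZero => 0
  end.

Fixpoint vadd (v w : seq int) : seq int :=
  match v, w with
  | [::], _ => w
  | _, [::] => v
  | a :: v', b :: w' => (a + b) :: vadd v' w'
  end.

Fixpoint zvec (e : zexpr) : seq int :=
  match e with
  | ZAt n => rcons (nseq n 0) 1
  | ZAdd a b => vadd (zvec a) (zvec b)
  | ZOpp a => map (fun c => - c) (zvec a)
  | ZZero => [::]
  end.

Fixpoint dvec (V : zmodType) (env : seq V) (v : seq int) : V :=
  match v with
  | [::] => 0
  | c :: v' => (head 0 env) *~ c + dvec (behead env) v'
  end.

Lemma dvec_add (V : zmodType) (v w : seq int) (env : seq V) :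
  dvec env (vadd v w) = dvec env v + dvec env w.
Proof.
elim: v w env => [|a v IH] [|b w] env /=; rewrite ?addr0 ?add0r //.
by rewrite IH mulrzDr addrACA.
Qed.

Lemma dvec_opp (V : zmodType) (v : seq int) (env : seq V) :
  dvec env (map (fun c => - c) v) = - dvec env v.
Proof. by elim: v env => [|a v IH] env /=; rewrite ?oppr0 // IH mulrNz opprD. Qed.

Lemma dvec_at (V : zmodType) n (env : seq V) :
  dvec env (rcons (nseq n 0) 1) = nth 0 env n.
Proof.
elim: n env => [|n IH] [|x env] /=.
- by rewrite mul0rz addr0.
- by rewrite mulr1z addr0.
- by rewrite mul0rz add0r IH nth_nil.
- by rewrite mulr0z add0r IH.
Qed.

Lemma zeval_dvec (V : zmodType) (env : seq V) e : zeval env e = dvec env (zvec e).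
Proof.
elim: e => [n|a IHa b IHb|a IHa|] /=.
- by rewrite dvec_at.
- by rewrite dvec_add IHa IHb.
- by rewrite dvec_opp IHa.
- by [].
Qed.

Lemma dvec_zero (V : zmodType) (env : seq V) v :
  all (fun c => c == 0) v -> dvec env v = 0.
Proof.
elim: v env => [|a v IH] env //= /andP[/eqP -> h].
by rewrite mulr0z add0r IH.
Qed.

Lemma zeval_sound (V : zmodType) (env : seq V) e1 e2 :
  all (fun c => c == 0) (zvec (ZAdd e1 (ZOpp e2))) -> zeval env e1 = zeval env e2.
Proof.
move=> h; apply/eqP; rewrite -subr_eq0; apply/eqP.
have := dvec_zero env h; rewrite -zeval_dvec /=. done.
Qed.

Ltac zmem x l :=
  lazymatch l with
  | x :: _ => constr:(true)
  | _ :: ?t => zmem x t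
  | _ => constr:(false)
  end.

Ltac zcollect e env :=
  lazymatch e with
  | (?a + ?b)%R => let env := zcollect a env in zcollect b env
  | (- ?a)%R => zcollect a env
  | 0%R => env
  | _ => let b := zmem e env in
         lazymatch b with
         | true => env
         | false => constr:(e :: env)
         end
  end.

Ltac zindex x l :=
  lazymatch l with
  | x :: _ => constr:(0%N)
  | _ :: ?t => let n := zindex x t in constr:(n.+1)
  end.

Ltac zreify e env :=
  lazymatch e with
  | (?a + ?b)%R => let ra := zreify a env in let rb := zreify b env in constr:(ZAdd ra rb)
  | (- ?a)%R => let ra := zreify a env in constr:(ZOpp ra)
  | 0%R => constr:(ZZero)
  | _ => let n := zindex e env in constr:(ZAt n)
  end.

Ltac zmod :=
  lazymatch goal with
  | |- @eq ?T ?l ?r =>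
    let env0 := zcollect l (@nil T) in
    let env1 := zcollect r env0 in
    let env := env1 in
    let el := zreify l env in
    let er := zreify r env in
    change (zeval env el = zeval env er);
    apply: zeval_sound; vm_compute; reflexivity
  end.


Lemma zc (V : zmodType) (Y : V) (Ps : seq V) :
  all (fun p => p == 0) Ps -> Y = foldr +%R 0 Ps -> Y = 0.
Proof.
move=> h ->; elim: Ps h => //= p Ps IH /andP[/eqP -> /IH ->]; by rewrite addr0.
Qed.

Lemma zc_nil (V : zmodType) : all (fun p : V => p == 0) [::].
Proof. by []. Qed.

Lemma zc_cons (V : zmodType) (p : V) ps :
  p = 0 -> all (fun p => p == 0) ps -> all (fun p => p == 0) (p :: ps).
Proof. by move=> -> h; rewrite /= eqxx. Qed.

Lemma zc_consN (V : zmodType) (p : V) ps :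
  p = 0 -> all (fun p => p == 0) ps -> all (fun p => p == 0) (- p :: ps).
Proof. by move=> -> h; rewrite /= oppr0 eqxx. Qed.

Lemma mulDl (K : fieldType) (A : lmodType K) (mul : A -> A -> A) (hmul : bilinear_mul mul) x y z :
  mul (x + y) z = mul x z + mul y z.
Proof. by have := hmul.1 1 x y z; rewrite !scale1r. Qed.
Lemma mulDr (K : fieldType) (A : lmodType K) (mul : A -> A -> A) (hmul : bilinear_mul mul) x y z :
  mul x (y + z) = mul x y + mul x z.
Proof. by have := hmul.2 1 x y z; rewrite !scale1r. Qed.
Lemma mul0l (K : fieldType) (A : lmodType K) (mul : A -> A -> A) (hmul : bilinear_mul mul) z :
  mul 0 z = 0.
Proof.
apply: (@addrI _ (mul 0 z)); by rewrite -(mulDl hmul) !addr0.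
Qed.
Lemma mul0r (K : fieldType) (A : lmodType K) (mul : A -> A -> A) (hmul : bilinear_mul mul) z :
  mul z 0 = 0.
Proof.
apply: (@addrI _ (mul z 0)); by rewrite -(mulDr hmul) !addr0.
Qed.
Lemma mulNl (K : fieldType) (A : lmodType K) (mul : A -> A -> A) (hmul : bilinear_mul mul) x z :
  mul (- x) z = - mul x z.
Proof.
apply: (@addrI _ (mul x z)); by rewrite -(mulDl hmul) !subrr (mul0l hmul).
Qed.
Lemma mulNr (K : fieldType) (A : lmodType K) (mul : A -> A -> A) (hmul : bilinear_mul mul) x z :
  mul z (- x) = - mul z x.
Proof.
apply: (@addrI _ (mul z x)); by rewrite -(mulDr hmul) !subrr (mul0r hmul).
Qed.
Lemma mulZl (K : fieldType) (A : lmodType K) (mul : A -> A -> A) (hmul : bilinear_mul mul) k x z :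
  mul (k *: x) z = k *: mul x z.
Proof. by have := hmul.1 k x 0 z; rewrite !addr0 (mul0l hmul) addr0. Qed.
Lemma mulZr (K : fieldType) (A : lmodType K) (mul : A -> A -> A) (hmul : bilinear_mul mul) k x z :
  mul z (k *: x) = k *: mul z x.
Proof. by have := hmul.2 k z x 0; rewrite !addr0 (mul0r hmul) addr0. Qed.

Lemma two0 (K : fieldType) (hK : (2%:R : K) != 0) (A : lmodType K) (v : A) :
  v + v = 0 -> v = 0.
Proof.
move=> h; have : (2%:R : K) *: v = 0 by rewrite scaler_nat mulr2n.
by move/eqP; rewrite scaler_eq0 (negbTE hK) /= => /eqP.
Qed.

Ltac expand hmul := repeat progress (rewrite ?(mulDl hmul) ?(mulDr hmul) ?(mulNl hmul) ?(mulNr hmul)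
  ?(mul0l hmul) ?(mul0r hmul)).

Ltac zcl := repeat (first [ apply: zc_nil | apply: zc_consN | apply: zc_cons ]).

Lemma ident_all (K : fieldType) (hK : (2%:R : K) != 0)
  (A : lmodType K) (mul : A -> A -> A) (hmul : bilinear_mul mul)
  (H : forall a : A, leib mul a a a = 0 /\ leib mul (mul a a) a a = 0) :
  let f0 a := mul (mul a a) a in
  let f a := mul (mul a a) (mul a a) in
  (forall a, f0 a = 0) /\ (forall a, f a = 0) /\
  (forall a b, mul (mul a b) a + mul (mul b a) a + mul (mul a a) b = 0) /\
  (forall a b c, mul (mul a b) c + mul (mul b a) c + mul (mul a c) b + mul (mul c a) b
                 + mul (mul b c) a + mul (mul c b) a = 0) /\
  (forall a b, mul (mul b b) (mul a a) + mul (mul a a) (mul b b)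
               + mul (mul a b + mul b a) (mul a b + mul b a) = 0) /\
  (forall a b, mul (mul a b + mul b a) (mul a a) + mul (mul a a) (mul a b + mul b a)
             + (mul (mul b a + mul a b) (mul b b) + mul (mul b b) (mul b a + mul a b)) = 0) /\
  (forall a b c, mul (mul b c + mul c b) (mul a a) + mul (mul a a) (mul b c + mul c b)
     + mul (mul a b + mul b a) (mul a c + mul c a) + mul (mul a c + mul c a) (mul a b + mul b a) = 0).
Proof.
move=> f0 f.
have I1 : forall a, mul (mul a a) a = 0.
  move=> a; have e := (H a).1; rewrite /leib in e.
  rewrite -[RHS]e; zmod.
have I2 : forall a, mul (mul a a) (mul a a) = 0.
  move=> a; have e := (H a).2; rewrite /leib (I1 a) (mul0l hmul) (mul0r hmul) in e.
  apply/eqP; rewrite -oppr_eq0; apply/eqP; rewrite -[RHS]e; zmod.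
have L1 : forall a b, mul (mul a b) a + mul (mul b a) a + mul (mul a a) b = 0.
  move=> a b; apply: (two0 hK).
  apply: (zc (Ps := [:: f0 (a + b); - f0 (a - b); - f0 b; - f0 b]));
    first by zcl; apply: I1.
  rewrite /f0 /=; expand hmul; zmod.
have S3 : forall a b c, mul (mul a b) c + mul (mul b a) c + mul (mul a c) b + mul (mul c a) b
                 + mul (mul b c) a + mul (mul c b) a = 0.
  move=> a b c.
  apply: (zc (Ps := [:: mul (mul (a + c) b) (a + c) + mul (mul b (a + c)) (a + c) + mul (mul (a + c) (a + c)) b;
     - (mul (mul a b) a + mul (mul b a) a + mul (mul a a) b);
     - (mul (mul c b) c + mul (mul b c) c + mul (mul c c) b)]));
    first by zcl; apply: L1.
  rewrite /=; expand hmul; zmod.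
have E2 : forall a b, mul (mul b b) (mul a a) + mul (mul a a) (mul b b)
               + mul (mul a b + mul b a) (mul a b + mul b a) = 0.
  move=> a b; apply: (two0 hK).
  apply: (zc (Ps := [:: f (a + b); f (a - b); - f a; - f a; - f b; - f b]));
    first by zcl; apply: I2.
  rewrite /f /=; expand hmul; zmod.
have E1 : forall a b, mul (mul a b + mul b a) (mul a a) + mul (mul a a) (mul a b + mul b a)
             + (mul (mul b a + mul a b) (mul b b) + mul (mul b b) (mul b a + mul a b)) = 0.
  move=> a b.
  apply: (zc (Ps := [:: f (a + b); - f a; - f b;
      - (mul (mul b b) (mul a a) + mul (mul a a) (mul b b)
               + mul (mul a b + mul b a) (mul a b + mul b a))]));
    first by zcl; [apply: I2|apply: I2|apply: I2|apply: E2].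
  rewrite /f /=; expand hmul; zmod.
do 6 (split; first by []).
move=> a b c.
apply: (zc (Ps := [:: mul (mul (b + c) (b + c)) (mul a a) + mul (mul a a) (mul (b + c) (b + c))
               + mul (mul a (b + c) + mul (b + c) a) (mul a (b + c) + mul (b + c) a);
    - (mul (mul b b) (mul a a) + mul (mul a a) (mul b b)
               + mul (mul a b + mul b a) (mul a b + mul b a));
    - (mul (mul c c) (mul a a) + mul (mul a a) (mul c c)
               + mul (mul a c + mul c a) (mul a c + mul c a))]));
  first by zcl; apply: E2.
rewrite /=; expand hmul; zmod.
Qed.

Fixpoint gp (A : Type) (mul : A -> A -> A) (g : A) (n : nat) : A :=
  match n with 0 => g | n'.+1 => mul g (gp mul g n') end.

Lemma key (K : fieldType) (hK : (2%:R : K) != 0)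
  (A : lmodType K) (mul : A -> A -> A) (hmul : bilinear_mul mul)
  (I1 : forall a, mul (mul a a) a = 0)
  (I2 : forall a, mul (mul a a) (mul a a) = 0)
  (L1 : forall a b, mul (mul a b) a + mul (mul b a) a + mul (mul a a) b = 0)
  (S3 : forall a b c, mul (mul a b) c + mul (mul b a) c + mul (mul a c) b + mul (mul c a) b
                 + mul (mul b c) a + mul (mul c b) a = 0)
  (E2 : forall a b, mul (mul b b) (mul a a) + mul (mul a a) (mul b b)
               + mul (mul a b + mul b a) (mul a b + mul b a) = 0)
  (E1 : forall a b, mul (mul a b + mul b a) (mul a a) + mul (mul a a) (mul a b + mul b a)
             + (mul (mul b a + mul a b) (mul b b) + mul (mul b b) (mul b a + mul a b)) = 0)
  (F : forall a b c, mul (mul b c + mul c b) (mul a a) + mul (mul a a) (mul b c + mul c b)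
     + mul (mul a b + mul b a) (mul a c + mul c a) + mul (mul a c + mul c a) (mul a b + mul b a) = 0)
  (g : A) :
  forall s i j, (0 < i)%N -> (i + j = s)%N -> mul (gp mul g i) (gp mul g j) = 0.
Proof.
pose G := gp mul g.
pose U i j := mul (G i) (G j).
have Z : forall k, (0 < k)%N -> (forall k', (0 < k')%N -> (k' < k)%N -> U k' 0%N = 0) -> U k k = 0.
  elim=> [//|k IH] _ hk.
  case: k IH hk => [|k] IH hk; first exact: I2.
  have e := E2 g (G k.+1).
  rewrite [mul (G k.+1) (G k.+1)]IH // in e; last first.
    by move=> k' h1 h2; apply: hk => //; apply: ltnW.
  rewrite [mul (G k.+1) g](hk k.+1) // in e.
  rewrite (mul0l hmul) (mul0r hmul) !add0r addr0 in e.
  exact: e.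
move=> s; elim/ltn_ind: s => s IH i j hi hij.
have IHU : forall i j, (0 < i)%N -> (i + j < s)%N -> U i j = 0.
  by move=> i' j' hi' h; apply: (IH (i' + j')%N h).
have Ug : forall i, (0 < i)%N -> (i < s)%N -> mul (G i) g = 0.
  by move=> i' h1 h2; apply: (IHU i' 0%N) => //; rewrite addn0.
case: s IH IHU Ug hij => [|[|s]] IH IHU Ug hij.
- by move: hij hi; case: i.
- have -> : i = 1%N by lia.
  have -> : j = 0%N by lia.
  exact: I1.
have R2 : forall i j, (0 < i)%N -> (i + j = s.+2)%N -> U i j + U j.+1 i.-1 = 0.
  move=> i' j' hi' hs.
  case: i' hi' hs => [//|[|i1]] _ hs.
  +
    have e := L1 g (G j').
    rewrite (Ug j') in e; try lia.
    rewrite (mul0l hmul) addr0 in e.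
    rewrite -[RHS]e /U /G /=; zmod.
  + case: j' hs => [|j0] hs.
    * have e := L1 g (G i1.+1).
      rewrite (Ug i1.+1) in e; try lia.
      rewrite (mul0l hmul) addr0 in e.
      rewrite -[RHS]e /U /G /=; zmod.
    * have e := S3 g (G i1.+1) (G j0.+1).
      rewrite (Ug i1.+1) ?(Ug j0.+1) in e; try lia.
      rewrite [mul (G i1.+1) (G j0.+1)]IHU in e; try lia.
      rewrite [mul (G j0.+1) (G i1.+1)]IHU in e; try lia.
      do 3 rewrite ?(mul0l hmul) ?(mul0r hmul) ?addr0 ?add0r in e.
      rewrite -[RHS]e /U /G /=; zmod.
have R1 : forall i j, (0 < i)%N -> (0 < j)%N -> (i + j = s.+2)%N -> U i j + U j i = 0.
  have Ef : forall k, (k.+3 = s.+2)%N -> U k.+2 1 + U 1 k.+2 = 0.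
    move=> k hk.
    have e := E1 g (G k.+1).
    rewrite (Ug k.+1) in e; try lia.
    rewrite [mul (G k.+1) (G k.+1)]Z in e; try lia; last first.
      by move=> k' h1 h2; apply: IHU => //; lia.
    do 3 rewrite ?(mul0l hmul) ?(mul0r hmul) ?addr0 ?add0r in e.
    rewrite -[RHS]e /U /G /=; zmod.
  move=> i' j' hi' hj' hs.
  case: i' hi' hs => [//|[|i0]] _ hs; case: j' hj' hs => [//|[|j0]] _ hs.
  + have -> : U 1 1 = 0 by exact: I2.
    by rewrite addr0.
  + rewrite addrC; apply: Ef; lia.
  + apply: Ef; lia.
  + have e := F g (G i0.+1) (G j0.+1).
    rewrite (Ug i0.+1) ?(Ug j0.+1) in e; try lia.
    rewrite [mul (G i0.+1) (G j0.+1)]IHU in e; try lia.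
    rewrite [mul (G j0.+1) (G i0.+1)]IHU in e; try lia.
    do 3 rewrite ?(mul0l hmul) ?(mul0r hmul) ?addr0 ?add0r in e.
    rewrite -[RHS]e /U /G /=; zmod.
have Ch : forall k, (k < s.+2)%N -> U (s.+2 - k)%N k = U s.+2 0%N.
  elim=> [|k IHk] hk; first by rewrite subn0.
  have e1 := R1 (s.+2 - k.+1)%N k.+1 ltac:(lia) ltac:(lia) ltac:(lia).
  have e2 := R2 k.+1 (s.+2 - k.+1)%N ltac:(lia) ltac:(lia).
  have h3 : (s.+2 - k.+1).+1 = (s.+2 - k)%N by lia.
  rewrite h3 /= IHk in e2; last by lia.
  apply/eqP; rewrite -subr_eq0; apply/eqP.
  apply: (zc (Ps := [:: U (s.+2 - k.+1)%N k.+1 + U k.+1 (s.+2 - k.+1)%N;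
                         - (U k.+1 (s.+2 - k.+1)%N + U s.+2 0%N)])).
    by zcl.
  rewrite /=; zmod.
have e3 := Ch s.+1 (ltnSn _).
have e4 := R2 1 s.+1 erefl erefl.
rewrite /= subSn // subnn in e3.
have U0 : U s.+2 0%N = 0.
  rewrite /= in e4; apply: (two0 hK); by rewrite -[RHS]e4 e3.
have -> : i = (s.+2 - j)%N by lia.
rewrite -/(G _) -/(G j) -/(U _ j) Ch; [exact: U0 | lia].
Qed.

Inductive isW (K : fieldType) (A : lmodType K) (mul : A -> A -> A) (g : A) : A -> Prop :=
  | W_G n : isW mul g (gp mul g n.+1)
  | W_0 : isW mul g 0
  | W_D x y : isW mul g x -> isW mul g y -> isW mul g (x + y)
  | W_Z (k : K) x : isW mul g x -> isW mul g (k *: x).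

Lemma structure_leib (K : fieldType) (A : lmodType K) (mul : A -> A -> A)
  (hmul : bilinear_mul mul) (g : A)
  (hk : forall i j, (0 < i)%N -> mul (gp mul g i) (gp mul g j) = 0) :
  leibniz_gen1 mul g.
Proof.
have Wg : forall w, isW mul g w -> isW mul g (mul g w).
  move=> w; elim=> [n|||k x _ IH].
  - exact: (W_G mul g n.+1).
  - rewrite (mul0r hmul); exact: W_0.
  - by move=> x y _ IHx _ IHy; rewrite (mulDr hmul); apply: W_D.
  - by rewrite (mulZr hmul); apply: W_Z.
have WL : forall w, isW mul g w -> mul w g = 0 /\ (forall w', isW mul g w' -> mul w w' = 0).
  move=> w; elim=> [n|||k x _ IH].
  - split; first exact: (hk n.+1 0%N).
    move=> w'; elim=> [m|||k x _ IH].
    + exact: hk.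
    + exact: (mul0r hmul).
    + by move=> x y _ IHx _ IHy; rewrite (mulDr hmul) IHx IHy addr0.
    + by rewrite (mulZr hmul) IH scaler0.
  - by split; [exact: (mul0l hmul) | move=> *; exact: (mul0l hmul)].
  - move=> x y _ [IHx1 IHx2] _ [IHy1 IHy2]; split.
      by rewrite (mulDl hmul) IHx1 IHy1 addr0.
    by move=> w' hw'; rewrite (mulDl hmul) IHx2 // IHy2 // addr0.
  - case: IH => IH1 IH2; split.
      by rewrite (mulZl hmul) IH1 scaler0.
    by move=> w' hw'; rewrite (mulZl hmul) IH2 // scaler0.
pose inS z := exists (al : K) w, isW mul g w /\ z = al *: g + w.
have WS : forall w z, isW mul g w -> inS z -> mul w z = 0.
  move=> w z hw [al [w' [hw' ->]]].
  have [h1 h2] := WL w hw.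
  by rewrite (mulDr hmul) (mulZr hmul) h1 h2 // scaler0 addr0.
have gS : forall z, inS z -> isW mul g (mul g z).
  move=> z [al [w' [hw' ->]]].
  rewrite (mulDr hmul) (mulZr hmul); apply: W_D; last exact: Wg.
  apply: W_Z; exact: (W_G mul g 0%N).
have mS : forall z1 z, inS z1 -> inS z -> exists al : K, mul z1 z = al *: mul g z.
  move=> z1 z [al [w [hw ->]]] hz; exists al.
  by rewrite (mulDl hmul) (mulZl hmul) (WS w z) // addr0.
have genS : forall z, gen1 mul g z -> inS z.
  move=> z; elim=> {z}.
  - by exists 1, 0; split; [exact: W_0 | rewrite scale1r addr0].
  - by exists 0, 0; split; [exact: W_0 | rewrite scale0r addr0].
  - move=> x y _ [a1 [w1 [h1 ->]]] _ [a2 [w2 [h2 ->]]].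
    exists (a1 + a2), (w1 + w2); split; first exact: W_D.
    rewrite scalerDl; zmod.
  - move=> k x _ [a1 [w1 [h1 ->]]].
    exists (k * a1), (k *: w1); split; first exact: W_Z.
    by rewrite scalerDr scalerA.
  - move=> x y _ hx _ hy.
    have [al ->] := mS x y hx hy.
    exists 0, (al *: mul g y); split; last by rewrite scale0r add0r.
    by apply: W_Z; apply: gS.
move=> a b c /genS ha /genS hb /genS hc.
rewrite /leib.
have [aa hab] := mS a b ha hb.
have [bb hbc] := mS b c hb hc.
have [cc hac] := mS a c ha hc.
have [dd hac'] := mS a c ha hc.
have hwab : isW mul g (mul a b) by rewrite hab; apply: W_Z; apply: gS.
have -> : mul (mul a b) c = 0 by apply: WS.
have hbcS : inS (mul b c).
  by exists 0, (mul b c); split; [rewrite hbc; apply: W_Z; apply: gS | rewrite scale0r add0r].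
have hacS : inS (mul a c).
  by exists 0, (mul a c); split; [rewrite hac; apply: W_Z; apply: gS | rewrite scale0r add0r].
case: ha => [al [wa [hwa ea]]].
case: hb => [bl [wb [hwb eb]]].
have -> : mul a (mul b c) = al *: mul g (mul b c).
  by rewrite ea (mulDl hmul) (mulZl hmul) (WS wa) // addr0.
have -> : mul b (mul a c) = bl *: mul g (mul a c).
  by rewrite eb (mulDl hmul) (mulZl hmul) (WS wb) // addr0.
have -> : mul b c = bl *: mul g c.
  by rewrite eb (mulDl hmul) (mulZl hmul) (WS wb) // addr0.
have -> : mul a c = al *: mul g c.
  by rewrite ea (mulDl hmul) (mulZl hmul) (WS wa) // addr0.
rewrite !(mulZr hmul) !scalerA mulrC.
by rewrite sub0r addrC subrr.
Qed.

Unset Implicit Arguments.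

Theorem theorem1 (K : fieldType) (hK : (2%:R : K) != 0)
  (A : lmodType K) (mul : A -> A -> A) (hmul : bilinear_mul mul) :
  unary_leibniz mul <->
  (forall a : A, leib mul a a a = 0 /\ leib mul (mul a a) a a = 0).
Proof.
split.
- move=> hU a; split.
    by apply: (hU a); apply: gen1_g.
  by apply: (hU a); [apply: gen1_M; apply: gen1_g | apply: gen1_g | apply: gen1_g].
- move=> H g.
  have [I1 [I2 [L1 [S3 [E2 [E1 F]]]]]] := ident_all hK hmul H.
  apply: (structure_leib hmul).
  move=> i j hi; exact: (key hK hmul I1 I2 L1 S3 E2 E1 F g (s := (i + j)%N) hi erefl).
Qed.
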